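(* Let $X,Y$ be types, $R:X\to Y\to\mathbb P$ a binary relation, and $l$ a list over $X$ and $m$ a list over $Y$ with $|m|<|l|$. Suppose that for every $x\in l$ there is $y\in m$ with $R\,x\,y$. Then there exist lists $l_1,l_2,l_3$, elements $x_1,x_2$ of $X$ and an element $y\in m$ such that <ul> <li>$l=l_1\mathbin{++}x_1::l_2\mathbin{++}x_2::l_3$,</li> <li>$R\,x_1\,y$, and</li> <li>$R\,x_2\,y$.</li> </ul>
   Context: This is stated in constructive type theory, with no decidability of equality assumed on $X$ or $Y$. $|l|$ denotes the length of a list, $\mathbin{++}$ concatenation, $::$ cons, and $x\in l$ list membership. The existential quantifiers are propositional. *)

(* Defs.v *)
From Stdlib Require Export List.
Export ListNotations.

(* Main.v *)
Require Import Defs.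
From Stdlib Require Import Lia.

Section S.
Variables (X Y : Type) (R : X -> Y -> Prop).

Inductive Two (y : Y) : list X -> Prop :=
| two_here x l x2 : R x y -> In x2 l -> R x2 y -> Two y (x :: l)
| two_cons z l : Two y l -> Two y (z :: l).

Lemma two_ins y l1 l2 x0 : Two y (l1 ++ l2) -> Two y (l1 ++ x0 :: l2).
Proof.
  induction l1 as [|z l1 IH]; simpl; intros H.
  - now apply two_cons.
  - inversion H as [x l x2 Hx Hin Hx2|z' l Hl]; subst.
    + eapply two_here; eauto. apply in_app_or in Hin. apply in_or_app.
      destruct Hin; [left|right; right]; auto.
    + apply two_cons; auto.
Qed.

Lemma two_split y l : Two y l ->
  exists (l1 l2 l3 : list X) (x1 x2 : X), l = l1 ++ x1 :: l2 ++ x2 :: l3 /\ R x1 y /\ R x2 y.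
Proof.
  induction 1 as [x l x2 H1 H2 H3|z l _ IH].
  - destruct (in_split _ _ H2) as [b [c ->]].
    exists [], b, c, x, x2; auto.
  - destruct IH as [a [b [c [x1 [x2 [-> [? ?]]]]]]].
    exists (z :: a), b, c, x1, x2; auto.
Qed.

Lemma sep y (Q : X -> Prop) l : (forall x, In x l -> R x y \/ Q x) ->
  Two y l \/ (exists l1 x0 l2, l = l1 ++ x0 :: l2 /\ R x0 y /\ forall x, In x (l1 ++ l2) -> Q x)
  \/ (forall x, In x l -> Q x).
Proof.
  induction l as [|x l IH]; intros H.
  - right; right; intros _ [].
  - destruct IH as [T|[[l1 [x0 [l2 [E [Rx0 HQ]]]]]|HQ]].
    + intros; apply H; right; auto.
    + left; now apply two_cons.
    + destruct (H x (or_introl eq_refl)) as [Rx|Qx].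
      * left. subst l. apply (two_here y x _ x0); auto. apply in_or_app; right; left; auto.
      * right; left. exists (x :: l1), x0, l2. subst l. split; auto. split; auto.
        intros z [<-|Hz]; auto.
    + destruct (H x (or_introl eq_refl)) as [Rx|Qx].
      * right; left. exists [], x, l. simpl; auto.
      * right; right. intros z [<-|Hz]; auto.
Qed.

Lemma main m : forall l, length m < length l ->
  (forall x, In x l -> exists y, In y m /\ R x y) ->
  exists y, In y m /\ Two y l.
Proof.
  induction m as [|y m IH]; intros l Hlen H.
  - destruct l as [|x l]; simpl in Hlen; [lia|].
    destruct (H x (or_introl eq_refl)) as [? [[] _]].
  - destruct (sep y (fun x => exists y', In y' m /\ R x y') l) as [T|[[l1 [x0 [l2 [E [Rx0 HQ]]]]]|HQ]].
    + intros x Hx. destruct (H x Hx) as [y' [[<-|Hy'] Rxy]]; [left|right; exists y']; auto.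
    + exists y; simpl; auto.
    + subst l. rewrite length_app in Hlen; simpl in Hlen.
      destruct (IH (l1 ++ l2)) as [y' [Hy' T]]; auto.
      * rewrite length_app; simpl in *; lia.
      * exists y'; split; [right; auto|]. now apply two_ins.
    + destruct (IH l) as [y' [Hy' T]]; auto.
      * simpl in *; lia.
      * exists y'; split; [right|]; auto.
Qed.
End S.

Theorem theorem7 (X Y : Type) (R : X -> Y -> Prop) (l : list X) (m : list Y) :
  length m < length l ->
  (forall x, In x l -> exists y, In y m /\ R x y) ->
  exists (l1 l2 l3 : list X) (x1 x2 : X) (y : Y),
    In y m /\ l = l1 ++ x1 :: l2 ++ x2 :: l3 /\ R x1 y /\ R x2 y.
Proof.
  intros Hl H.
  destruct (main X Y R m l Hl H) as [y [Hy T]].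
  destruct (two_split X Y R y l T) as [a [b [c [x1 [x2 [E [H1 H2]]]]]]].
  exists a, b, c, x1, x2, y; auto.
Qed.
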